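(* For all integers $k$ and $m$ with $k \geq m \geq 0$, \[ \sum_{n=0}^{m} \binom{m}{n} \binom{k+n}{m} \binom{k+m+n}{m+n}^{-1} \frac{2n + k + 1}{m + n + k + 1} = 1 . \]
   Context: $\binom{a}{b}$ denotes the usual binomial coefficient $\frac{a!}{b!\,(a-b)!}$ for integers $0\le b\le a$. *)

(* Defs.v *)
From mathcomp Require Import all_boot all_order all_algebra.

(* Main.v *)
Require Import Defs.
From mathcomp Require Import all_boot all_order all_algebra.
From mathcomp Require Import ring lra.
Import GRing.Theory Num.Theory.
Local Open Scope ring_scope.

Definition h (m k n : nat) : rat :=
  'C(m, n)%:R * 'C(k + n, m)%:R * ((m + n)`!)%:R * (k`!)%:R / ((k + m + n).+1`!)%:R.

Lemma fact_neq0 (n : nat) : (n`!)%:R != 0 :> rat.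
Proof. by rewrite pnatr_eq0 -lt0n fact_gt0. Qed.

Lemma recur m k n : (n <= m)%N ->
  (2 * n + k.+1 + 1)%:R * h m k.+1 n - (2 * n + k + 1)%:R * h m k n
  = (n.+1)%:R * h m k n.+1 - n%:R * h m k n.
Proof.
move=> nm; rewrite /h.
have E1 : (k.+1 + n = (k + n).+1)%N by rewrite addSn.
have E2 : (k.+1 + m + n).+1 = ((k + m + n).+1).+1 by rewrite !addSn.
have E3 : (k + n.+1 = (k + n).+1)%N by rewrite addnS.
have E4 : (m + n.+1 = (m + n).+1)%N by rewrite addnS.
have E5 : (k + m + n.+1).+1 = ((k + m + n).+1).+1 by rewrite addnS.
rewrite E1 E2 E3 E4 E5.
have f1 : ((k+m+n).+2`!)%:R = (k+m+n).+2%:R * ((k + m + n).+1`!)%:R :> rat by rewrite factS natrM.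
have f2 : (k.+1`!)%:R = k.+1%:R * (k`!)%:R :> rat by rewrite factS natrM.
have f3 : ((m+n).+1`!)%:R = (m+n).+1%:R * ((m+n)`!)%:R :> rat by rewrite factS natrM.
rewrite f1 f2 f3.
have h1 := fact_neq0 (k + m + n).+1. have h2 := fact_neq0 k. have h3 := fact_neq0 (m + n).
move: h1 h2 h3.
set F1 := ((k + m + n).+1`!)%:R. set F2 := (k`!)%:R. set F3 := ((m+n)`!)%:R.
clearbody F1 F2 F3.
move=> h1 h2 h3.
have H1 := mul_bin_left m n.
have H2 := mul_bin_down (k + n).+1 m. rewrite /= in H2.
set B := 'C(m, n) in H1 *; set B1 := 'C(m, n.+1) in H1 *.
set X := 'C((k + n).+1, m) in H2 *; set Y := 'C(k + n, m) in H2 *.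
have HB1 : B1%:R = (m - n)%:R * B%:R / n.+1%:R :> rat.
  by rewrite -natrM -H1 natrM mulrC mulKf // pnatr_eq0.
have HY : Y%:R = ((k + n).+1 - m)%:R * X%:R / (k + n).+1%:R :> rat.
  by rewrite -natrM -H2 natrM mulrC mulKf // pnatr_eq0.
rewrite HB1 HY (natrB _ nm).
have [le|lt] := leqP m (k + n).+1.
  rewrite (natrB _ le).
  rewrite -!natr1 !natrD ?natrM.
  have p1 := ler0n rat k. have p2 := ler0n rat m. have p3 := ler0n rat n.
  field.
  by apply/and4P; split => //; apply: lt0r_neq0; lra.
have -> : X = 0%N by rewrite /X bin_small.
by rewrite !(mulr0, mul0r) subrr.
Qed.

Lemma term_eq m k n :
  'C(m, n)%:R * 'C(k + n, m)%:R / 'C(k + m + n, m + n)%:R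
        * ((2 * n + k + 1)%:R / (m + n + k + 1)%:R) = (2 * n + k + 1)%:R * h m k n :> rat.
Proof.
rewrite /h.
have HC := bin_fact (leq_addl k (m + n)).
rewrite addnK addnA in HC.
have E : (m + n + k + 1 = (k + m + n).+1)%N by rewrite addn1 addnC addnA.
rewrite E factS -HC !natrM.
have h2 := fact_neq0 k. have h3 := fact_neq0 (m + n).
have hC : 'C(k + m + n, m + n)%:R != 0 :> rat.
  by rewrite pnatr_eq0 -lt0n bin_gt0 -addnA leq_addl.
have p1 := ler0n rat k. have p2 := ler0n rat m. have p3 := ler0n rat n.
field.
by apply/and4P; split => //; apply: lt0r_neq0; lra.
Qed.

Lemma S0 m : \sum_(0 <= n < m.+1) (2 * n + 0 + 1)%:R * h m 0 n = 1.
Proof.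
rewrite big_nat_recr //= big1_seq ?add0r; last first.
  move=> i /andP[_]; rewrite mem_index_iota => /andP[_ lt].
  by rewrite /h add0n (bin_small lt) !(mulr0, mul0r).
rewrite /h !add0n binn fact0 factS addn0 mul2n -addnn addn1 natrM.
have h3 := fact_neq0 (m + m).
have h4 : (m + m).+1%:R != 0 :> rat by rewrite pnatr_eq0.
have p2 := ler0n rat m. field. by apply/andP; split => //; apply: lt0r_neq0; lra.
Qed.

Lemma Sstep m k : \sum_(0 <= n < m.+1) (2 * n + k.+1 + 1)%:R * h m k.+1 n
  = \sum_(0 <= n < m.+1) (2 * n + k + 1)%:R * h m k n.
Proof.
apply/eqP; rewrite -subr_eq0 -sumrB.
rewrite (eq_big_nat _ _ (F2 := fun n => (n.+1)%:R * h m k n.+1 - n%:R * h m k n)); last first.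
  by move=> i /andP[_ lt]; apply: recur.
rewrite (telescope_sumr (fun n => n%:R * h m k n)) //.
by rewrite /h bin_small // !(mulr0, mul0r) subrr.
Qed.

Theorem mainTheorem1 (k m : nat) (hmk : (m <= k)%N) :
  \sum_(0 <= n < m.+1)
     ('C(m, n)%:R * 'C(k + n, m)%:R / 'C(k + m + n, m + n)%:R
        * ((2 * n + k + 1)%:R / (m + n + k + 1)%:R)) = (1 : rat).
Proof.
under eq_bigr do rewrite term_eq.
clear hmk; elim: k => [|k IH]; first exact: S0.
by rewrite Sstep.
Qed.
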